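(* Let $N\to\infty$, let $n=n(N)\ge 2$ be an integer, and let $p=p(N)$ satisfy $p N^2\to\infty$ (i.e. $\frac{1}{N^2}\ll p$) and $p\le \frac1N$. Then asymptotically almost surely $\mathrm{ex}(G(N,p),P_{n+1})=\Theta(pN^2)$, i.e. there are absolute constants $c_1,c_2>0$ such that a.a.s. $c_1pN^2\le \mathrm{ex}(G(N,p),P_{n+1})\le c_2pN^2$. In particular, a.a.s. $\mathrm{ex}(G(N,1/N),P_{n+1})\ge N/15$.
   Context: $G(N,p)$ denotes the Erdős–Rényi random graph on vertex set $[N]=\{1,\dots,N\}$ in which each pair is an edge independently with probability $p$. $P_k$ denotes the path on $k$ vertices. For graphs $G,F$, $\mathrm{ex}(G,F)$ is the maximum number of edges in an $F$-free subgraph of $G$. An event holds asymptotically almost surely (a.a.s.) if its probability tends to $1$ as $N\to\infty$. *)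

(* Defs.v *)
From HB Require Import structures.
From mathcomp Require Import all_boot all_order all_algebra.
From mathcomp Require Import reals.
Set Implicit Arguments. Unset Strict Implicit. Unset Printing Implicit Defensive.
Import Order.TTheory GRing.Theory Num.Theory.

(* Graphs on vertex set [N] = 'I_N are represented by their edge sets,
   i.e. sets of 2-element subsets of 'I_N. *)
Definition pairs (N : nat) : {set {set 'I_N}} := [set e : {set 'I_N} | #|e| == 2].

Definition is_graph N (G : {set {set 'I_N}}) : bool := G \subset pairs N.

(* H contains a (not necessarily induced) copy of P_k, the path on k vertices:
   k distinct vertices f 0, ..., f (k-1) with {f i, f (i+1)} an edge. *)
Definition has_path N (H : {set {set 'I_N}}) (k : nat) : bool :=
  [exists f : {ffun 'I_k -> 'I_N},
     injectiveb f &&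
     [forall i : 'I_k, forall j : 'I_k,
        (val j == (val i).+1) ==> ([set f i; f j] \in H)]].

Definition ex_path N (G : {set {set 'I_N}}) (k : nat) : nat :=
  \max_(H in powerset G | ~~ has_path H k) #|H|.

Local Open Scope ring_scope.

Definition gnp_weight (R : realType) (N : nat) (p : R) (G : {set {set 'I_N}}) : R :=
  p ^+ #|G| * (1 - p) ^+ (#|pairs N| - #|G|)%N.

Definition gnp_prob (R : realType) (N : nat) (p : R)
    (E : {set {set 'I_N}} -> bool) : R :=
  \sum_(G in powerset (pairs N) | E G) gnp_weight p G.

Definition aas (R : realType) (P : nat -> R) : Prop :=
  forall eps : R, 0 < eps -> exists N0 : nat, forall N : nat, (N0 <= N)%N ->
    1 - eps <= P N.

Definition tends_to_infty (R : realType) (x : nat -> R) : Prop :=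
  forall M : R, exists N0 : nat, forall N : nat, (N0 <= N)%N -> M <= x N.

(* Main.v *)
Require Import Defs.
From HB Require Import structures.
From mathcomp Require Import all_boot all_order all_algebra.
From mathcomp Require Import reals.
From mathcomp Require Import zify ring lra.
Import Order.TTheory GRing.Theory Num.Theory.
Set Implicit Arguments. Unset Strict Implicit. Unset Printing Implicit Defensive.
Local Open Scope ring_scope.
Local Close Scope ring_scope.

Definition matching N (H : {set {set 'I_N}}) :=
  forall e f, e \in H -> f \in H -> e != f -> [disjoint e & f].

Lemma matching_nopath N (H : {set {set 'I_N}}) k :
  (3 <= k)%N -> matching H -> ~~ has_path H k.
Proof.
move=> k3 mH; apply/existsP => [[f /andP [/injectiveP inj /forallP Hf]]].
have h0 : (0 < k)%N by lia.
have h1 : (1 < k)%N by lia.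
have h2 : (2 < k)%N by lia.
pose i0 := Ordinal h0; pose i1 := Ordinal h1; pose i2 := Ordinal h2.
have e1 : [set f i0; f i1] \in H by have := forallP (Hf i0) i1; rewrite eqxx.
have e2 : [set f i1; f i2] \in H by have := forallP (Hf i1) i2; rewrite eqxx.
have ne : [set f i0; f i1] != [set f i1; f i2].
  apply/negP => /eqP E.
  have : f i0 \in [set f i1; f i2] by rewrite -E set21.
  rewrite !inE => /orP [] /eqP /inj /(congr1 val) //=.
have := mH _ _ e1 e2 ne; rewrite -setI_eq0 => /eqP E.
have : f i1 \in [set f i0; f i1] :&: [set f i1; f i2] by rewrite !inE !eqxx orbT.
by rewrite E inE.
Qed.

Lemma exists_matching N (G : {set {set 'I_N}}) : G \subset pairs N ->
  exists H : {set {set 'I_N}}, [/\ H \subset G, matching H & (#|cover G| <= #|H| + #|G|)%N].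
Proof.
elim: {G}#|G| {-2}G (leqnn #|G|) => [|m IH] G.
  rewrite leqn0 cards_eq0 => /eqP -> _; exists set0; split => //.
    by move=> e f; rewrite inE.
  by rewrite /cover big_set0 cards0.
move=> Gm Gp.
case: (boolP [exists v, exists e1, exists e2,
   [&& e1 \in G, e2 \in G, e1 != e2, v \in e1 & v \in e2]]).
- move=> /existsP [v /existsP [e1 /existsP [e2 /and5P [e1G e2G ne v1 v2]]]].
  have Gc : #|G| = (#|G :\ e1| + 1)%N by rewrite (cardsD1 e1 G) e1G; lia.
  have Gm' : (#|G :\ e1| <= m)%N by lia.
  have Gp' : G :\ e1 \subset pairs N.
    by apply: (subset_trans (subsetDl G [set e1])) Gp.
  have [H [HG mH cH]] := IH (G :\ e1) Gm' Gp'.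
  exists H; split => //.
    by apply: (subset_trans HG); apply: subsetDl.
  have e1p : e1 \in pairs N by apply: (subsetP Gp).
  have ce : #|e1 :\ v| = 1%N.
    by move: e1p; rewrite inE (cardsD1 v e1) v1 => /eqP; lia.
  have sub : cover G \subset cover (G :\ e1) :|: (e1 :\ v).
    apply/subsetP => x /bigcupP [e eG xe].
    case: (eqVneq e e1) => [Ee|nee].
      subst e; case: (eqVneq x v) => [Exv|nxv].
        subst x; rewrite inE; apply/orP; left; apply/bigcupP; exists e2 => //.
        by rewrite !inE eq_sym ne.
      by rewrite !inE nxv xe orbT.
    rewrite inE; apply/orP; left; apply/bigcupP; exists e => //.
    by rewrite !inE nee.
  have := subset_leq_card sub.
  have := leq_card_setU (cover (G :\ e1)) (e1 :\ v).
  move=> [] le _; lia.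
- rewrite negb_exists => /forallP nov.
  exists G; split => //.
    move=> e f eG fG nef; rewrite -setI_eq0; apply/eqP/setP => v.
    rewrite !inE; apply/negP => /andP [ve vf].
    move: (nov v); rewrite negb_exists => /forallP /(_ e).
    rewrite negb_exists => /forallP /(_ f).
    by rewrite eG fG nef ve vf.
  have := leq_card_cover G; move=> [] le _.
  have : (\sum_(A in G) #|A| = 2 * #|G|)%N.
    rewrite (eq_bigr (fun _ => 2%N)) ?sum_nat_const; first by rewrite mulnC.
    by move=> A AG; have := subsetP Gp A AG; rewrite inE => /eqP.
  lia.
Qed.

Lemma ex_path_ge N (G H : {set {set 'I_N}}) k :
  H \subset G -> ~~ has_path H k -> (#|H| <= ex_path G k)%N.
Proof.
move=> HG nH; rewrite /ex_path.
by apply: (leq_bigmax_cond (F := fun H0 : {set {set 'I_N}} => #|H0|)); rewrite powersetE HG.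
Qed.

Lemma ex_path_le N (G : {set {set 'I_N}}) k : (ex_path G k <= #|G|)%N.
Proof.
by apply/bigmax_leqP => H /andP [HG _]; apply: subset_leq_card; rewrite -powersetE.
Qed.

Lemma ex_path_cover N (G : {set {set 'I_N}}) n : G \subset pairs N -> (2 <= n)%N ->
  (#|cover G| <= ex_path G n.+1 + #|G|)%N.
Proof.
move=> Gp n2; have [H [HG mH cH]] := exists_matching Gp.
have := ex_path_ge HG (matching_nopath (k := n.+1) ltac:(lia) mH); lia.
Qed.


Local Open Scope ring_scope.

Lemma sum_powerset_prod (R : comNzRingType) (T : finType) (U : {set T}) (g : T -> bool -> R) :
  \sum_(G in powerset U) \prod_(e in U) g e (e \in G) = \prod_(e in U) (g e true + g e false).
Proof.
pose F e b := if e \in U then g e b else (if b then 0 else 1 : R).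
have -> : \prod_(e in U) (g e true + g e false) = \prod_e \sum_(b : bool) F e b.
  rewrite big_mkcond /=; apply: eq_bigr => e _; rewrite big_bool /F.
  by case: (e \in U) => //=; rewrite add0r.
rewrite bigA_distr_bigA /=.
have -> : \sum_(G in powerset U) \prod_(e in U) g e (e \in G) =
          \sum_(G : {set T}) \prod_e F e (e \in G).
  rewrite [LHS]big_mkcond /=; apply: eq_big => // G _.
  rewrite powersetE; case: (boolP (G \subset U)) => GU.
    rewrite [LHS]big_mkcond /=; apply: eq_bigr => e _; rewrite /F.
    case eU: (e \in U) => //; have -> : (e \in G) = false.
      by apply/negP => eG; move: (subsetP GU e eG); rewrite eU.
    by [].
  have [e eG eU] : exists2 e, e \in G & e \notin U.
    by move/subsetPn: GU => [e eG eU]; exists e.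
  rewrite (bigD1 e) //= /F (negPf eU) eG mul0r //.
rewrite (reindex (fun f : {ffun T -> bool} => [set e | f e])) /=.
  by apply: eq_bigr => f _; apply: eq_bigr => e _; rewrite inE.
exists (fun G : {set T} => [ffun e => e \in G]) => [f _ | G _].
  by apply/ffunP => e; rewrite ffunE inE.
by apply/setP => e; rewrite inE ffunE.
Qed.

Section Prob.
Variable R : realType.
Variable N : nat.
Variable p : R.
Hypothesis p0 : 0 <= p.
Hypothesis p1 : p <= 1.

Local Notation Om := (powerset (pairs N)).

Definition Ex (f : {set {set 'I_N}} -> R) := \sum_(G in Om) gnp_weight p G * f G.

Lemma prod_if_const (T : finType) (A B : {set T}) (x : R) : A \subset B ->
  \prod_(e in B) (if e \in A then x else 1) = x ^+ #|A|.
Proof.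
move=> AB; rewrite -big_mkcondr /= -prodr_const; apply: eq_bigl => e.
by case eA: (e \in A); rewrite ?andbF ?andbT // (subsetP AB).
Qed.

Lemma weight_prod (G : {set {set 'I_N}}) : G \subset pairs N ->
  gnp_weight p G = \prod_(e in pairs N) (if e \in G then p else 1 - p).
Proof.
move=> Gp; rewrite (bigID (fun e => e \in G)) /=.
rewrite (eq_bigr (fun _ => p)); last by move=> e /andP [_ ->].
rewrite [X in _ * X](eq_bigr (fun _ => 1 - p)); last by move=> e /andP [_ /negPf ->].
rewrite !prodr_const /gnp_weight.
congr (_ ^+ _ * _ ^+ _).
  apply: eq_card => e /=; apply/idP/andP => [eG|[] //]; split => //.
  by rewrite (subsetP Gp).
rewrite -{1}(setIidPr Gp) -cardsD.
by apply: eq_card => e /=; rewrite [LHS]inE andbC.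
Qed.

Lemma weight_ge0 (G : {set {set 'I_N}}) : 0 <= gnp_weight p G.
Proof. by rewrite /gnp_weight mulr_ge0 // exprn_ge0 // subr_ge0. Qed.

Lemma Ex_event (S T : {set {set 'I_N}}) : S \subset pairs N -> T \subset pairs N ->
  [disjoint S & T] ->
  Ex (fun G => ((S \subset G) && [disjoint G & T])%:R) = p ^+ #|S| * (1 - p) ^+ #|T|.
Proof.
move=> Sp Tp ST.
pose g e (b : bool) := if b then (if e \in T then 0 else p) else (if e \in S then 0 else 1 - p).
have -> : Ex (fun G => ((S \subset G) && [disjoint G & T])%:R) =
   \sum_(G in Om) \prod_(e in pairs N) g e (e \in G).
  apply: eq_bigr => G; rewrite powersetE => Gp; rewrite weight_prod //.
  case: (boolP ((S \subset G) && [disjoint G & T])) => [/andP [SG GT]|].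
    rewrite mulr1; apply: eq_bigr => e _; rewrite /g.
    case eG: (e \in G).
      by have -> : (e \in T) = false by apply: (disjointFr GT).
    by have -> : (e \in S) = false by apply/negP => eS; move: (subsetP SG e eS); rewrite eG.
  rewrite negb_and mulr0 => /orP [/subsetPn [e eS eG] | /pred0Pn [e /andP [eG eT]]].
    by rewrite (bigD1 e) ?(subsetP Sp) //= /g (negPf eG) eS mul0r.
  have eG' : e \in G by []. have eT' : e \in T by [].
  by rewrite (bigD1 e) ?(subsetP Tp) //= /g eG' eT' mul0r.
rewrite sum_powerset_prod.
rewrite -(prod_if_const p Sp) -(prod_if_const (1 - p) Tp) -big_split /=.
apply: eq_bigr => e _; rewrite /g.
case eS: (e \in S); case eT: (e \in T) => /=.
- by have := disjointFr ST eS; rewrite eT.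
- by rewrite addr0 mulr1.
- by rewrite add0r mul1r.
- by rewrite addrC subrK mul1r.
Qed.

Lemma Ex_lin (I : finType) (P : pred I) (f : I -> {set {set 'I_N}} -> R) :
  Ex (fun G => \sum_(i | P i) f i G) = \sum_(i | P i) Ex (f i).
Proof.
rewrite /Ex (eq_bigr (fun G => \sum_(i | P i) gnp_weight p G * f i G)).
  by rewrite exchange_big.
by move=> G _; rewrite mulr_sumr.
Qed.

Lemma Ex_ext (f g : {set {set 'I_N}} -> R) : (forall G : {set {set 'I_N}}, G \subset pairs N -> f G = g G) -> Ex f = Ex g.
Proof. by move=> H; apply: eq_bigr => G; rewrite powersetE => /H ->. Qed.

Lemma Ex_le (f g : {set {set 'I_N}} -> R) : (forall G : {set {set 'I_N}}, G \subset pairs N -> f G <= g G) -> Ex f <= Ex g.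
Proof.
move=> H; apply: ler_sum => G; rewrite powersetE => /H fg.
by apply: ler_wpM2l => //; apply: weight_ge0.
Qed.

Lemma Ex1 : Ex (fun _ => 1) = 1.
Proof.
have d0 : forall X : {set {set 'I_N}}, [disjoint X & set0] by move=> X; rewrite -setI_eq0 setI0.
have := @Ex_event set0 set0 (sub0set _) (sub0set _) (d0 _).
rewrite !cards0 !expr0 mulr1 => E; rewrite -[RHS]E; apply: Ex_ext => G _.
by rewrite sub0set d0.
Qed.

Lemma ExD (f g : {set {set 'I_N}} -> R) : Ex (fun G => f G + g G) = Ex f + Ex g.
Proof. by rewrite /Ex -big_split; apply: eq_bigr => G _; rewrite mulrDr. Qed.

Lemma ExZ c (f : {set {set 'I_N}} -> R) : Ex (fun G => c * f G) = c * Ex f.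
Proof. by rewrite /Ex mulr_sumr; apply: eq_bigr => G _; rewrite mulrCA. Qed.

End Prob.

Definition star N (v : 'I_N) : {set {set 'I_N}} := [set e in pairs N | v \in e].

Lemma card_pairs N : (#|pairs N| * 2 = N * N.-1)%N.
Proof.
have -> : #|pairs N| = 'C(N, 2) by rewrite /pairs card_draws card_ord.
have := bin_ffact N 2; rewrite ffactnS ffactn1 => <-.
by rewrite (_ : 2`! = 2%N).
Qed.

Lemma card_star N (v : 'I_N) : #|star v| = N.-1.
Proof.
have -> : star v = [set [set v; w] | w in [set~ v]].
  apply/setP => e; rewrite inE; apply/andP/imsetP.
    move=> [ep ve]; move: ep; rewrite inE => /cards2P [x [y [xy Ee]]].
    move: ve; rewrite Ee !inE => /orP [] /eqP Ev; subst.
      exists y; [by rewrite !inE eq_sym | by []].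
    exists x; [by rewrite !inE | by rewrite setUC].
  move=> [w]; rewrite !inE => wv ->; split; last by rewrite !inE eqxx.
  by rewrite cards2 (eq_sym v w) wv.
rewrite card_in_imset; first by rewrite cardsC1 card_ord.
move=> w1 w2; rewrite !inE => w1v w2v E.
have : w1 \in [set v; w2] by rewrite -E !inE eqxx orbT.
by rewrite !inE (negPf w1v) /= => /eqP.
Qed.

Lemma card_star_inter N (u v : 'I_N) : u != v -> (#|star u :&: star v| <= 1)%N.
Proof.
move=> uv; rewrite -(cards1 [set u; v]); apply: subset_leq_card.
apply/subsetP => e; rewrite !inE => /andP [/andP [ep ue] /andP [_ ve]].
rewrite eq_sym eqEcard; apply/andP; split.
  by rewrite subUset !sub1set ue ve.
by move: ep => /eqP ->; rewrite cards2 uv.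
Qed.

Lemma card_star_union N (u v : 'I_N) : u != v -> (2 * N - 3 <= #|star u :|: star v|)%N.
Proof.
move=> uv; have := cardsUI (star u) (star v); rewrite !card_star.
have := card_star_inter uv; lia.
Qed.

Lemma cover_star N (G : {set {set 'I_N}}) v : G \subset pairs N ->
  (v \notin cover G) = [disjoint G & star v].
Proof.
move=> Gp; apply/idP/idP.
  move=> vG; rewrite -setI_eq0; apply/eqP/setP => e; rewrite !inE.
  apply/negP => /and3P [eG _ ve]; move/negP: vG; apply; apply/bigcupP; by exists e.
move=> d; apply/negP => /bigcupP [e eG ve].
have ep := subsetP Gp e eG.
by move: d; rewrite -setI_eq0 => /eqP/setP/(_ e); rewrite in_setI /star in_set ep ve eG in_set0.
Qed.

Lemma card_sum (R : realType) (T : finType) (A B : {set T}) : A \subset B ->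
  (#|A|%:R : R) = \sum_(x in B) (x \in A)%:R.
Proof.
move=> AB; rewrite -sumr_const.
rewrite [LHS]big_mkcond [RHS]big_mkcond /=; apply: eq_bigr => x _.
case xA: (x \in A); first by rewrite (subsetP AB).
by case: (x \in B).
Qed.

Lemma bool_mul (R : realType) (a b : bool) : (a && b)%:R = a%:R * b%:R :> R.
Proof. by case: a; case: b; rewrite ?mulr1 ?mulr0. Qed.

Section Moments.
Variable R : realType.
Variable N : nat.
Variable p : R.
Hypothesis p0 : 0 <= p.
Hypothesis p1 : p <= 1.

Local Notation Ex := (@Ex R N p).

Lemma d0 (X : {set {set 'I_N}}) : [disjoint X & set0].
Proof. by rewrite -setI_eq0 setI0. Qed.

Lemma Ex_edge e : e \in pairs N -> Ex (fun G => (e \in G)%:R) = p.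
Proof.
move=> ep.
have := Ex_event p (S:=[set e]) (T:=set0); rewrite sub1set ep => /(_ isT (sub0set _)).
move=> /(_ (d0 _)); rewrite cards1 cards0 expr1 expr0 mulr1 => E; rewrite -[RHS]E.
by apply: Ex_ext => G _; rewrite sub1set d0 andbT.
Qed.

Lemma Ex_card : Ex (fun G => #|G|%:R) = #|pairs N|%:R * p.
Proof.
rewrite (Ex_ext p (g := fun G => \sum_(e in pairs N) (e \in G)%:R)); last first.
  by move=> G Gp; apply: card_sum.
rewrite Ex_lin (eq_bigr (fun _ => p)); last by move=> e ep; apply: Ex_edge.
by rewrite sumr_const mulr_natl.
Qed.

Lemma Ex_card2 : Ex (fun G => #|G|%:R ^+ 2) <= #|pairs N|%:R * p + #|pairs N|%:R ^+ 2 * p ^+ 2.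
Proof.
rewrite (Ex_ext p (g := fun G => \sum_(e in pairs N) \sum_(f in pairs N)
     (([set e; f] \subset G) && [disjoint G & set0])%:R)); last first.
  move=> G Gp; rewrite expr2 (card_sum R Gp) mulr_suml; apply: eq_bigr => e _.
  rewrite mulr_sumr; apply: eq_bigr => f _.
  by rewrite d0 andbT subUset !sub1set bool_mul.
rewrite Ex_lin.
apply: le_trans (_ : \sum_(e in pairs N) (#|pairs N|%:R * p ^+ 2 + p) <= _).
  apply: ler_sum => e ep; rewrite Ex_lin.
  apply: le_trans (_ : \sum_(f in pairs N) (p ^+ 2 + (f \in [set e])%:R * p) <= _).
    apply: ler_sum => f fp.
    rewrite Ex_event; [|by rewrite subUset !sub1set ep fp|by apply: sub0set|by apply: d0].
    rewrite cards0 expr0 mulr1 inE.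
    case: (eqVneq f e) => [->|fe]; first by rewrite setUid cards1 expr1 mul1r lerDr sqr_ge0.
    by rewrite cards2 eq_sym fe mul0r addr0.
  rewrite big_split /= sumr_const -mulr_suml -card_sum ?sub1set // cards1 mul1r.
  by rewrite mulr_natl.
rewrite sumr_const -mulr_natl le_eqVlt; apply/orP; left; apply/eqP; ring.
Qed.

Lemma star_pairs (v : 'I_N) : star v \subset pairs N.
Proof. by apply/subsetP => e; rewrite inE => /andP []. Qed.

Lemma Ex_I : Ex (fun G => #|~: cover G|%:R) = N%:R * (1 - p) ^+ N.-1.
Proof.
rewrite (Ex_ext p (g := fun G => \sum_(v in [set: 'I_N])
     ((set0 \subset G) && [disjoint G & star v])%:R)); last first.
  move=> G Gp; rewrite (card_sum R (subsetT (~: cover G))).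
  by apply: eq_bigr => v _; rewrite sub0set inE cover_star.
rewrite Ex_lin (eq_bigr (fun _ => (1 - p) ^+ N.-1)).
  by rewrite sumr_const cardsT card_ord mulr_natl.
move=> v _; rewrite Ex_event ?sub0set ?star_pairs //; last first.
  by rewrite -setI_eq0 set0I.
by rewrite cards0 expr0 mul1r card_star.
Qed.

Lemma Ex_I2 : Ex (fun G => #|~: cover G|%:R ^+ 2) <=
   N%:R * (1 - p) ^+ N.-1 + N%:R * N.-1%:R * (1 - p) ^+ (2 * N - 3).
Proof.
rewrite (Ex_ext p (g := fun G => \sum_(u in [set: 'I_N]) \sum_(v in [set: 'I_N])
     ((set0 \subset G) && [disjoint G & star u :|: star v])%:R)); last first.
  move=> G Gp; rewrite expr2 (card_sum R (subsetT (~: cover G))) mulr_suml.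
  apply: eq_bigr => u _; rewrite mulr_sumr; apply: eq_bigr => v _.
  rewrite sub0set !inE !cover_star // -bool_mul.
  by rewrite -!setI_eq0 setIUr setU_eq0.
rewrite Ex_lin.
have q0 : 0 <= 1 - p by rewrite subr_ge0.
have q1 : 1 - p <= 1 by rewrite lerBlDr lerDl.
apply: le_trans (_ : \sum_(u in [set: 'I_N]) ((1 - p) ^+ N.-1 + N.-1%:R * (1 - p) ^+ (2 * N - 3)) <= _); last first.
  by rewrite sumr_const cardsT card_ord -mulr_natl le_eqVlt; apply/orP; left; apply/eqP; ring.
apply: ler_sum => u _; rewrite Ex_lin (bigD1 u) //=.
rewrite Ex_event ?sub0set ?setUid ?star_pairs //; last by rewrite -setI_eq0 set0I.
rewrite cards0 expr0 mul1r card_star lerD2l.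
apply: le_trans (_ : \sum_(v in [set: 'I_N] | v != u) (1 - p) ^+ (2 * N - 3) <= _).
  apply: ler_sum => v /andP [_ vu].
  rewrite Ex_event ?sub0set //; last by rewrite -setI_eq0 set0I.
    rewrite cards0 expr0 mul1r; apply: ler_wiXn2l => //.
    by apply: card_star_union; rewrite eq_sym.
  by rewrite subUset !star_pairs.
rewrite sumr_const (eq_card (B := predC1 u)) ?cardC1 ?card_ord ?mulr_natl //.
  by move=> v; rewrite /in_mem /=; case: (v != u); rewrite ?andbT ?andbF //; exact: (in_setT v).
by rewrite in_setT.
Qed.
End Moments.

Section Analytic.
Variable R : realType.

Lemma bern1 (p : R) k : 0 <= p -> p <= 1 -> 1 - k%:R * p <= (1 - p) ^+ k.
Proof.
move=> p0 p1; elim: k => [|k IH]; first by rewrite mul0r subr0 expr0.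
rewrite exprS -natr1.
have q0 : 0 <= (1 - p) ^+ k by rewrite exprn_ge0 // subr_ge0.
have k0 : 0 <= k%:R :> R by rewrite ler0n.
nra.
Qed.

Lemma bern2 (p : R) k : 0 <= p ->
  1 + k%:R * p + k%:R * (k%:R - 1) / 2 * p ^+ 2 <= (1 + p) ^+ k.
Proof.
move=> p0; elim: k => [|k IH]; first by rewrite !mul0r !addr0 expr0.
rewrite [(1 + p) ^+ k.+1]exprS -natr1.
have k0 : 0 <= k%:R :> R by rewrite ler0n.
have h : (1 + k%:R * p + k%:R * (k%:R - 1) / 2 * p ^+ 2) * (1 + p) <= (1 + p) * (1 + p) ^+ k.
  by rewrite mulrC ler_wpM2l // addr_ge0 // ler01.
apply: (le_trans _ h).
have e : (1 + k%:R * p + k%:R * (k%:R - 1) / 2 * p ^+ 2) * (1 + p) =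
  1 + (k%:R + 1) * p + (k%:R + 1) * (k%:R + 1 - 1) / 2 * p ^+ 2 + k%:R * (k%:R - 1) / 2 * p ^+ 3.
  by rewrite !expr2 exprS expr2; field.
rewrite e lerDl.
case: k k0 {IH h e} => [|k] k0; first by rewrite !mul0r.
rewrite -natr1 addrK mulr_ge0 ?exprn_ge0 // mulr_ge0 ?invr_ge0 ?ler0n // mulr_ge0 ?ler0n //.
by rewrite natr1 ler0n.
Qed.

Lemma q_bound (p : R) k : 0 <= p -> p <= 1 ->
  (1 - p) ^+ k * (1 + k%:R * p + k%:R * (k%:R - 1) / 2 * p ^+ 2) <= 1.
Proof.
move=> p0 p1.
apply: le_trans (_ : (1 - p) ^+ k * (1 + p) ^+ k <= 1).
  by apply: ler_wpM2l; [rewrite exprn_ge0 // subr_ge0 | apply: bern2].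
rewrite -exprMn; apply: exprn_ile1.
  by rewrite mulr_ge0 // ?subr_ge0 // addr_ge0 // ler01.
have : (1 - p) * (1 + p) = 1 - p * p by ring.
move=> ->; nra.
Qed.

Lemma key_ineq (k p q : R) : 10 <= k -> 0 <= p -> (k + 1) * p <= 1 -> 0 <= q ->
  q * (1 + k * p + k * (k - 1) / 2 * p ^+ 2) <= 1 ->
  k * p / 2 + (1/15 + 1/500) * p * (k + 1) <= 1 - q.
Proof.
move=> k10 p0 kp1 q0 qB.
set x := k * p.
have x0 : 0 <= x by rewrite /x mulr_ge0 //; lra.
have x1 : x <= 1 by rewrite /x; nra.
have px : 10 * p <= x by rewrite /x; nra.
set y := k * (k - 1) / 2 * p ^+ 2.
have ye : y = (x * x - x * p) / 2 by rewrite /y /x; field.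
have yx : 9 / 20 * (x * x) <= y by rewrite ye; nra.
have B0 : 0 < 1 + x + y by nra.
have qle : q * (1 + x + y) <= 1 by [].
have main : (1 + x + y) * (x / 2 + (1/15 + 1/500) * (x + p)) <= x + y.
  have a1 : (x / 2 + (1/15 + 1/500) * (x + p)) <= 5756 / 10000 * x by nra.
  have a2 : 5756 / 10000 * x * (1 + x + y) <= x + y.
    have ax : 0 <= 1 - 5756 / 10000 * x by lra.
    have : 0 <= x * (4244 / 10000 - 1256 / 10000 * x - 259 / 1000 * (x * x)) by nra.
    nra.
  nra.
have e1 : k * p / 2 + (1/15 + 1/500) * p * (k + 1) = x / 2 + (1/15 + 1/500) * (x + p).
  by rewrite /x; ring.
rewrite e1; nra.
Qed.

End Analytic.


Lemma pw_helper (R : realType) (b1 b2 g : bool) : (~~ b1 -> ~~ b2 -> g) ->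
  (1 : R) + ((-1) * b1%:R + (-1) * b2%:R) <= g%:R.
Proof.
by case: b1; case: b2; case: g => //= H; rewrite ?mulr1n ?mulr0n; try lra; have := H isT isT.
Qed.

Lemma natE1 N : (11 <= N)%N -> (2 * N - 3 = N.-1 + (N - 2))%N. Proof. lia. Qed.
Lemma natE2 N : (11 <= N)%N -> (N.-1 + N.-1 = (2 * N - 3).+1)%N. Proof. lia. Qed.
Lemma natE3 N : (11 <= N)%N -> (2 <= N)%N. Proof. lia. Qed.

Section Main.
Variable R : realType.
Variable N : nat.
Variable p : R.
Hypothesis p0 : 0 <= p.
Hypothesis p1 : p <= 1.
Local Notation Ex := (@Ex R N p).

Lemma prob_Ex (E : {set {set 'I_N}} -> bool) : gnp_prob p E = Ex (fun G => (E G)%:R).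
Proof.
rewrite /gnp_prob /Ex big_mkcondr; apply: eq_bigr => G _.
by case: (E G); rewrite ?mulr1 ?mulr0.
Qed.

Lemma cheb (X : {set {set 'I_N}} -> R) (t : R) : 0 < t ->
  Ex (fun G => ((Ex X + t <= X G)%R)%:R) <= (Ex (fun G => X G ^+ 2) - (Ex X) ^+ 2) / t ^+ 2.
Proof.
move=> t0; set mu := Ex X.
have t2 : 0 < t ^+ 2 by rewrite exprn_gt0.
apply: le_trans (_ : Ex (fun G => t ^-2 * X G ^+ 2 + ((-2 * mu * t ^-2) * X G + (mu ^+ 2 * t ^-2) * 1)) <= _).
  apply: (Ex_le p0 p1) => G _.
  have -> : t ^-2 * X G ^+ 2 + ((-2 * mu * t ^-2) * X G + (mu ^+ 2 * t ^-2) * 1) = (X G - mu) ^+ 2 / t ^+ 2.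
    by field; rewrite gt_eqF.
  case h: (mu + t <= X G).
    rewrite ler_pdivlMr // mul1r; nra.
  by rewrite divr_ge0 // ?sqr_ge0 // ltW.
rewrite ExD ExD !ExZ Ex1 -/mu le_eqVlt; apply/orP; left; apply/eqP.
by field; rewrite gt_eqF.
Qed.


Lemma main_bound n : (2 <= n)%N -> (11 <= N)%N -> p * N%:R <= 1 -> 0 < p * N%:R ^+ 2 ->
  1 - 3 * 10 ^+ 6 / (p * N%:R ^+ 2) <= gnp_prob p (fun G : {set {set 'I_N}} =>
     ((1/15 * p * N%:R ^+ 2 <= (ex_path G n.+1)%:R) && ((ex_path G n.+1)%:R <= 2 * p * N%:R ^+ 2))%R).
Proof.
move=> n2 N11 pN L0; set L := p * N%:R ^+ 2.
set t := L / 10 ^+ 3.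
have t0 : 0 < t by rewrite /t divr_gt0 // exprn_gt0.
set m := fun G : {set {set 'I_N}} => (#|G|%:R : R).
set I := fun G : {set {set 'I_N}} => (#|~: cover G|%:R : R).
have Em : Ex m = #|pairs N|%:R * p by apply: Ex_card.
have EI : Ex I = N%:R * (1 - p) ^+ N.-1 by apply: Ex_I.
have Em2 := Ex_card2 N p.
have EI2 := Ex_I2 N p0 p1.
have hk : (N.-1)%:R = N%:R - 1 :> R.
  by rewrite -subn1 natrB //; lia.
have hM : #|pairs N|%:R * 2 = N%:R * (N%:R - 1) :> R.
  by rewrite -hk -natrM card_pairs natrM.
have N0 : (11 : R) <= N%:R by rewrite ler_nat.
set q := (1 - p) ^+ N.-1.
set r := (1 - p) ^+ (2 * N - 3).
set s := (1 - p) ^+ (N - 2).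
have q0 : 0 <= q by rewrite exprn_ge0 // subr_ge0.
have q1 : q <= 1 by rewrite exprn_ile1 // ?subr_ge0 // lerBlDr lerDl.
have s0 : 0 <= s by rewrite exprn_ge0 // subr_ge0.
have s1 : s <= 1 by rewrite exprn_ile1 // ?subr_ge0 // lerBlDr lerDl.
have E1 : (2 * N - 3 = N.-1 + (N - 2))%N by apply: natE1.
have E2 : (N.-1 + N.-1 = (2 * N - 3).+1)%N by apply: natE2.
have rs : r = q * s by rewrite /r /q /s E1 exprD.
have qq : q * q = r * (1 - p) by rewrite /r /q -exprD E2 exprSr.
have sb : 1 - (N - 2)%N%:R * p <= s by apply: bern1.
have hN2 : (N - 2)%N%:R = N%:R - 2 :> R by rewrite natrB // (natE3 N11).
rewrite hN2 in sb.
have V1 : Ex (fun G => m G ^+ 2) - Ex m ^+ 2 <= L.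
  rewrite Em; apply: le_trans (_ : #|pairs N|%:R * p <= _).
    by move: Em2; rewrite /m; lra.
  have -> : #|pairs N|%:R = N%:R * (N%:R - 1) / 2 :> R by rewrite -hM; field.
  rewrite /L; have : 0 <= p * N%:R by rewrite mulr_ge0 // ler0n.
  move=> h; nra.
have V2 : Ex (fun G => I G ^+ 2) - Ex I ^+ 2 <= 2 * L.
  rewrite EI -/q; apply: le_trans (_ : N%:R * q + N%:R * N.-1%:R * r - (N%:R * q) ^+ 2 <= _).
    by move: EI2; rewrite /I -/q -/r; lra.
  rewrite hk rs (_ : (N%:R * q) ^+ 2 = N%:R ^+ 2 * (q * q)); last by ring.
  rewrite qq rs /L.
  have e : N%:R * q + N%:R * (N%:R - 1) * (q * s) - N%:R ^+ 2 * (q * s * (1 - p)) =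
           N%:R * (q * (1 - s)) + N%:R ^+ 2 * p * (q * s) by ring.
  rewrite e.
  have a1 : q * (1 - s) <= (N%:R - 2) * p.
    apply: le_trans (_ : 1 * (1 - s) <= _); last by lra.
    by apply: ler_wpM2r; lra.
  have a2 : q * s <= 1 by rewrite mulr_ile1.
  have a3 : 0 <= N%:R ^+ 2 * p by rewrite mulr_ge0 // exprn_ge0 // ler0n.
  have b1 : N%:R * (q * (1 - s)) <= N%:R * ((N%:R - 2) * p) by rewrite ler_wpM2l // ler0n.
  have b2 : N%:R ^+ 2 * p * (q * s) <= N%:R ^+ 2 * p * 1 by rewrite ler_wpM2l.
  have b3 : 0 <= N%:R * p by rewrite mulr_ge0 // ler0n.
  rewrite expr2 in b2 *; lra.
have EmL : Ex m <= L.
  rewrite Em; have -> : #|pairs N|%:R = N%:R * (N%:R - 1) / 2 :> R by rewrite -hM; field.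
  rewrite /L; have : 0 <= p * N%:R by rewrite mulr_ge0 // ler0n.
  move=> h; nra.
have key : L / 15 <= N%:R - Ex I - Ex m - 2 * t.
  have kq := key_ineq (k := N%:R - 1) (p := p) (q := q).
  have kq' : (N%:R - 1) * p / 2 + (1 / 15 + 1 / 500) * p * (N%:R - 1 + 1) <= 1 - q.
    apply: kq => //; first lra.
      by rewrite subrK mulrC.
    by rewrite -hk; apply: q_bound.
  have := ler_wpM2l (ler0n R N) kq'.
  rewrite EI Em; have -> : #|pairs N|%:R = N%:R * (N%:R - 1) / 2 :> R by rewrite -hM; field.
  rewrite /t /L -/q => h.
  have e1 : N%:R * ((N%:R - 1) * p / 2 + (1 / 15 + 1 / 500) * p * (N%:R - 1 + 1)) =
     N%:R * (N%:R - 1) / 2 * p + p * N%:R ^+ 2 / 15 + 2 * (p * N%:R ^+ 2 / 10 ^+ 3) by field.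
  have e2 : N%:R * (1 - q) = N%:R - N%:R * q by ring.
  rewrite e1 e2 in h; lra.
have pw : forall G : {set {set 'I_N}}, G \subset pairs N ->
   (1 : R) + ((-1) * ((Ex m + t <= m G)%R)%:R + (-1) * ((Ex I + t <= I G)%R)%:R) <=
   (((1/15 * p * N%:R ^+ 2 <= (ex_path G n.+1)%:R) && ((ex_path G n.+1)%:R <= 2 * p * N%:R ^+ 2))%R)%:R.
  move=> G Gp; apply: pw_helper; rewrite -!ltNge => h1 h2.
  have hc := ex_path_cover Gp n2.
  have hl := ex_path_le G n.+1.
  have hc' : (#|cover G|%:R : R) <= (ex_path G n.+1)%:R + m G by rewrite /m -natrD ler_nat.
  have hl' : ((ex_path G n.+1)%:R : R) <= m G by rewrite /m ler_nat.
  have hC : (#|cover G|%:R : R) + I G = N%:R by rewrite /I -natrD cardsC card_ord.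
  have -> : 1/15 * p * N%:R ^+ 2 = L / 15 by rewrite /L; ring.
  have -> : 2 * p * N%:R ^+ 2 = 2 * L by rewrite /L; ring.
  have h10 : (1 : R) <= 10 ^+ 3 by apply: exprn_ege1; lra.
  have tL : t <= L by rewrite /t ler_pdivrMr ?exprn_gt0 //; nra.
  clearbody m I t L; apply/andP; split.
    lra.
  lra.
rewrite prob_Ex.
apply: le_trans (_ : Ex (fun G => 1 + ((-1) * ((Ex m + t <= m G)%R)%:R + (-1) * ((Ex I + t <= I G)%R)%:R)) <= _); last first.
  by apply: (Ex_le p0 p1) => G Gp; apply: pw.
rewrite ExD ExD !ExZ Ex1.
have c1 := cheb m t0.
have c2 := cheb I t0.
have tt : L / t ^+ 2 = 10 ^+ 6 / L.
  by rewrite /t; field; rewrite gt_eqF.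
have d1 : (Ex (fun G => m G ^+ 2) - Ex m ^+ 2) / t ^+ 2 <= 10 ^+ 6 / L.
  by rewrite -tt ler_wpM2r // invr_ge0 exprn_ge0 // ltW.
have d2 : (Ex (fun G => I G ^+ 2) - Ex I ^+ 2) / t ^+ 2 <= 2 * (10 ^+ 6 / L).
  by rewrite -tt mulrA ler_wpM2r // invr_ge0 exprn_ge0 // ltW.
have -> : 3 * 10 ^+ 6 / L = 10 ^+ 6 / L + 2 * (10 ^+ 6 / L) by ring.
lra.
Qed.

End Main.

Lemma aas_step (R : realType) (eps L : R) : 0 < eps -> 3 * 10 ^+ 6 / eps <= L ->
  0 < L /\ 1 - eps <= 1 - 3 * 10 ^+ 6 / L.
Proof.
move=> e0 hL.
have c0 : (0 : R) < 3 * 10 ^+ 6 by rewrite mulr_gt0 // exprn_gt0.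
have M0 : 0 < 3 * 10 ^+ 6 / eps by rewrite divr_gt0.
have L0 : 0 < L by apply: lt_le_trans hL.
split => //.
rewrite lerD2l lerN2 ler_pdivrMr //.
move: hL; rewrite ler_pdivrMr // => h; by rewrite [eps * L]mulrC.
Qed.

Theorem proposition1p3 (R : realType) :
  (exists c1 c2 : R, 0 < c1 /\ 0 < c2 /\
     forall (n : nat -> nat) (p : nat -> R),
       (forall N, (2 <= n N)%N) ->
       (forall N, 0 <= p N) ->
       (forall N, (0 < N)%N -> p N <= 1 / N%:R) ->
       tends_to_infty (fun N => p N * (N%:R) ^+ 2) ->
       aas (fun N => gnp_prob (p N)
              (fun G : {set {set 'I_N}} => (c1 * p N * (N%:R) ^+ 2 <= (ex_path G (n N).+1)%:R)
                        && ((ex_path G (n N).+1)%:R <= c2 * p N * (N%:R) ^+ 2))))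
  /\
  (forall n : nat -> nat, (forall N, (2 <= n N)%N) ->
     aas (fun N => gnp_prob (1 / N%:R : R)
            (fun G : {set {set 'I_N}} => (N%:R / 15 : R) <= (ex_path G (n N).+1)%:R))).
Proof.
split.
  exists (1/15), 2; split; first lra; split; first lra.
  move=> n p hn hp0 hp1 hinf eps e0.
  have [N1 HN1] := hinf (3 * 10 ^+ 6 / eps).
  exists (maxn N1 11) => N; rewrite geq_max => /andP [NN1 N11].
  have [L0 Le] := aas_step e0 (HN1 N NN1).
  have Npos : (0 : R) < N%:R by rewrite ltr0n; lia.
  have pN : p N * N%:R <= 1.
    by have := hp1 N ltac:(lia); rewrite -ler_pdivlMr // => h.
  have p1 : p N <= 1.
    have : (1 : R) <= N%:R by rewrite ler1n; lia.
    have := hp0 N; nra.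
  apply: le_trans Le _.
  exact: main_bound (hp0 N) p1 (n N) (hn N) N11 pN L0.
move=> n hn eps e0.
pose B := Num.Def.archi_bound (3 * 10 ^+ 6 / eps).
have hB : 3 * 10 ^+ 6 / eps < B%:R.
  by apply: archi_boundP; apply: ltW; rewrite divr_gt0 // mulr_gt0 // exprn_gt0.
exists (maxn B 11) => N; rewrite geq_max => /andP [NB N11].
have Npos : (0 : R) < N%:R by rewrite ltr0n; lia.
have LN : 1 / N%:R * N%:R ^+ 2 = N%:R :> R by rewrite expr2; field; rewrite gt_eqF.
have hL : 3 * 10 ^+ 6 / eps <= 1 / N%:R * N%:R ^+ 2.
  rewrite LN; apply: (le_trans (ltW hB)); by rewrite ler_nat.
have [L0 Le] := aas_step e0 hL.
have p0 : (0 : R) <= 1 / N%:R by rewrite divr_ge0 // ltW.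
have p1 : (1 : R) / N%:R <= 1.
  by rewrite ler_pdivrMr // mul1r ler1n; lia.
have pN : 1 / N%:R * N%:R <= 1 :> R by rewrite mul1r mulVf // gt_eqF.
apply: le_trans Le _.
apply: le_trans (main_bound p0 p1 (hn N) N11 pN L0) _.
rewrite !prob_Ex //; apply: (Ex_le p0 p1) => G _.
have E : 1 / 15 * (1 / N%:R) * N%:R ^+ 2 = N%:R / 15 :> R.
  by rewrite expr2; field; rewrite gt_eqF.
rewrite ler_nat E; set c := (N%:R / 15 <= _)%R.
by case: c; case: (_ <= _)%R.
Qed.
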